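(* Let $a>0$, $r>0$, $0<\delta<r$, and let $p\ge 2$ be an integer. For $s\in\mathbb{R}$ and sequences $\mathbf v_k=\{v_{k,n}\}_{n\ge0}\subset\ell^a_e$ ($k=1,2$), define $\mathcal M(s,\mathbf v_1,\mathbf v_2)=\{M_n(s,\mathbf v_1,\mathbf v_2)\}_{n\ge 0}$ by $$M_n(s,\mathbf v_1,\mathbf v_2)=\sum_{n_1=0}^{n}v_{1,n_1}v_{2,n-n_1}+\sum_{n_2\ge0}s^{n_2}v_{1,n+n_2}v_{2,n_2}+\sum_{n_1\ge 1}s^{n_1}v_{1,n_1}v_{2,n+n_1},$$ (products taken pointwise in $j\in\mathbb{Z}$); equivalently, for $s=|z|^2$, $\sum_{n\ge0}(z^n+\bar z^n)M_n=\big(\sum_{n_1\ge0}(z^{n_1}+\bar z^{n_1})v_{1,n_1}\big)\big(\sum_{n_2\ge0}(z^{n_2}+\bar z^{n_2})v_{2,n_2}\big)$. Define inductively $\mathcal M_2=\mathcal M$ and $\mathcal M_k(s,\mathbf v_1,\dots,\mathbf v_k)=\mathcal M_2(s,\mathbf v_1,\mathcal M_{k-1}(s,\mathbf v_2,\dots,\mathbf v_k))$. Then $s\mapsto\mathcal M_p(s,\cdot,\dots,\cdot)$ belongs to $C^\omega(B_{\mathbb{R}}(\delta^2);\mathcal L^p(X_{a,r};X_{a,r}))$, and $$\sup_{z\in B_{\mathbb{C}}(\delta)}\|\mathcal M_p(|z|^2,\cdot,\dots,\cdot)\|_{\mathcal L^p(X_{a,r};X_{a,r})}\lesssim 1.$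$
   Context: $\ell^a_e=\{u:\mathbb{Z}\to\mathbb{R}:\ \|u\|_{\ell^a_e}=(\sum_j e^{2a|j|}|u(j)|^2)^{1/2}<\infty\}$. $X_{a,r}=\{\mathbf v=\{v_n\}_{n\ge0}\subset\ell^a_e:\ \|\mathbf v\|_{a,r}=\sum_{n\ge0}r^n\|v_n\|_{\ell^a_e}<\infty\}$. For Banach spaces $X,Y$, $\mathcal L(X;Y)$ is the space of bounded linear operators, $\mathcal L^1(X;Y)=\mathcal L(X;Y)$ and $\mathcal L^n(X;Y)=\mathcal L(X;\mathcal L^{n-1}(X;Y))$ (bounded $n$-linear maps). $B_{\mathbb{R}}(\rho)=(-\rho,\rho)$, $B_{\mathbb{C}}(\rho)=\{z:|z|<\rho\}$; $C^\omega$ means real analytic. $\lesssim$ means bounded by a constant independent of $z$. *)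

(* Defs.v *)
From Stdlib Require Import Reals ZArith.
From Coquelicot Require Import Coquelicot.
Open Scope R_scope.

Definition seqZ := Z -> R.

(* n-th term of the Z-indexed sum  sum_j e^{2a|j|} |u j|^2, grouping j = n and j = -n. *)
Definition elle_term (a : R) (u : seqZ) (n : nat) : R :=
  match n with
  | O => (u 0%Z) ^ 2
  | S _ => exp (2 * a * INR n) * ((u (Z.of_nat n)) ^ 2 + (u (- Z.of_nat n)%Z) ^ 2)
  end.

Definition in_elle (a : R) (u : seqZ) : Prop := ex_series (elle_term a u).

Definition elle_norm (a : R) (u : seqZ) : R := sqrt (Series (elle_term a u)).

Definition V := nat -> seqZ.

Definition inX (a r : R) (v : V) : Prop :=
  (forall n, in_elle a (v n)) /\ ex_series (fun n => r ^ n * elle_norm a (v n)).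

Definition Xnorm (a r : R) (v : V) : R := Series (fun n => r ^ n * elle_norm a (v n)).

Definition Vadd (u w : V) : V := fun n j => u n j + w n j.
Definition Vscal (c : R) (u : V) : V := fun n j => c * u n j.
Definition Vsub (u w : V) : V := fun n j => u n j - w n j.
Definition Vzero : V := fun _ _ => 0.

(* a p-tuple of arguments is represented by vs : nat -> V (only indices < p matter) *)
Definition upd (vs : nat -> V) (i : nat) (u : V) : nat -> V :=
  fun k => if Nat.eqb k i then u else vs k.

Fixpoint prodR (n : nat) (f : nat -> R) : R :=
  match n with O => 1 | S m => prodR m f * f m end.

Definition args_inX (p : nat) (a r : R) (vs : nat -> V) : Prop :=
  forall k, (k < p)%nat -> inX a r (vs k).

Definition pl_linear (p : nat) (a r : R) (T : (nat -> V) -> V) : Prop :=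
  forall vs i u w c, (i < p)%nat -> args_inX p a r vs -> inX a r u -> inX a r w ->
    T (upd vs i (Vadd u (Vscal c w))) = Vadd (T (upd vs i u)) (Vscal c (T (upd vs i w))).

(* ||T||_{L^p(X;X)} <= K : T maps X^p into X with ||T(v_1..v_p)|| <= K prod ||v_i|| *)
Definition pl_bound (p : nat) (a r : R) (T : (nat -> V) -> V) (K : R) : Prop :=
  forall vs, args_inX p a r vs ->
    inX a r (T vs) /\ Xnorm a r (T vs) <= K * prodR p (fun i => Xnorm a r (vs i)).

Definition in_Lp (p : nat) (a r : R) (T : (nat -> V) -> V) : Prop :=
  pl_linear p a r T /\ exists K, pl_bound p a r T K.

Definition pl_add (T1 T2 : (nat -> V) -> V) : (nat -> V) -> V := fun vs => Vadd (T1 vs) (T2 vs).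
Definition pl_sub (T1 T2 : (nat -> V) -> V) : (nat -> V) -> V := fun vs => Vsub (T1 vs) (T2 vs).
Definition pl_scal (c : R) (T : (nat -> V) -> V) : (nat -> V) -> V := fun vs => Vscal c (T vs).

Fixpoint pl_psum (A : nat -> (nat -> V) -> V) (h : R) (N : nat) : (nat -> V) -> V :=
  match N with
  | O => fun _ => Vzero
  | S m => pl_add (pl_psum A h m) (pl_scal (h ^ m) (A m))
  end.

(* F belongs to C^omega(B_R(rho0); L^p(X_{a,r};X_{a,r})): F s is in L^p for every s
   in (-rho0, rho0), and near every s0 in that interval F is the sum of a power series
   in s - s0 with coefficients in L^p(X;X), converging in operator norm. *)
Definition real_analytic_Lp (p : nat) (a r : R) (F : R -> (nat -> V) -> V) (rho0 : R) : Prop :=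
  (forall s, Rabs s < rho0 -> in_Lp p a r (F s)) /\
  forall s0, Rabs s0 < rho0 ->
    exists rho, 0 < rho /\
    exists A : nat -> (nat -> V) -> V, (forall k, in_Lp p a r (A k)) /\
      forall s, Rabs (s - s0) < rho -> Rabs s < rho0 ->
        forall eps, 0 < eps -> exists N0 : nat, forall N, (N0 <= N)%nat ->
          pl_bound p a r (pl_sub (F s) (pl_psum A (s - s0) N)) eps.

Definition Mbil (s : R) (v1 v2 : V) : V := fun n j =>
  sum_f_R0 (fun n1 => v1 n1 j * v2 (n - n1)%nat j) n
  + Series (fun n2 => s ^ n2 * v1 (n + n2)%nat j * v2 n2 j)
  + Series (fun m => s ^ (S m) * v1 (S m) j * v2 (n + S m)%nat j).

(* Mk k s (v_1,...,v_k) with v_i = vs (i-1);  Mk 2 = Mbil,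
   Mk k s (v_1..v_k) = Mbil s v_1 (Mk (k-1) s (v_2..v_k)).  (Mk 1 is the identity,
   Mk 0 is junk; only k >= 2 is used.) *)
Fixpoint Mk (k : nat) (s : R) (vs : nat -> V) : V :=
  match k with
  | O => Vzero
  | S O => vs O
  | S k' => Mbil s (vs O) (Mk k' s (fun i => vs (S i)))
  end.

(* Main.v *)
Require Import Defs.
From Stdlib Require Import Reals ZArith.
From Coquelicot Require Import Coquelicot.
From Stdlib Require Import Lra Lia Arith FunctionalExtensionality.
Open Scope R_scope.


Lemma ser_bound (a : nat -> R) (M : R) :
  (forall n, 0 <= a n) -> (forall N, sum_f_R0 a N <= M) -> ex_series a /\ Series a <= M.
Proof.
  intros Ha HM.
  assert (Hg : Un_growing (fun N => sum_f_R0 a N)).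
  { intro n. simpl. specialize (Ha (S n)). lra. }
  destruct (growing_cv _ Hg) as [l Hl].
  { exists M. intros x [N ->]. apply HM. }
  assert (Hs : is_series a l) by (apply is_series_Reals; exact Hl).
  split. { exists l; exact Hs. }
  rewrite (is_series_unique _ _ Hs).
  apply Rnot_lt_le; intro Hlt.
  destruct (Hl (l - M)) as [N HN]; [lra|].
  specialize (HN N (le_n N)). specialize (HM N). unfold R_dist in HN.
  apply Rabs_def2 in HN. lra.
Qed.

Lemma partial_le_series (a : nat -> R) N :
  (forall n, 0 <= a n) -> ex_series a -> sum_f_R0 a N <= Series a.
Proof.
  intros Ha He. apply sum_incr; [|exact Ha].
  apply is_series_Reals. apply Series_correct. exact He.
Qed.

Lemma sum_nonneg (a : nat -> R) N : (forall n, 0 <= a n) -> 0 <= sum_f_R0 a N.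
Proof. intros Ha; induction N; simpl; [apply Ha|]. specialize (Ha (S N)); lra. Qed.

Lemma term_le_sum (a : nat -> R) m : (forall n, 0 <= a n) -> a m <= sum_f_R0 a m.
Proof.
  intros Ha. destruct m; simpl; [lra|]. pose proof (sum_nonneg a m Ha); lra.
Qed.

Lemma term_le_series (a : nat -> R) m :
  (forall n, 0 <= a n) -> ex_series a -> a m <= Series a.
Proof.
  intros Ha He. eapply Rle_trans; [apply term_le_sum; exact Ha|].
  apply partial_le_series; auto.
Qed.

Lemma series_nonneg (a : nat -> R) : (forall n, 0 <= a n) -> ex_series a -> 0 <= Series a.
Proof.
  intros Ha He. eapply Rle_trans; [apply (Ha O)|]. apply term_le_series; auto.
Qed.

Lemma ser_abs (f g : nat -> R) :
  (forall n, Rabs (f n) <= g n) -> ex_series g -> ex_series f /\ Rabs (Series f) <= Series g.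
Proof.
  intros Hfg Hg.
  assert (Hfa : ex_series (fun n => Rabs (f n))).
  { apply (@ex_series_le R_AbsRing R_CompleteNormedModule _ g); [|exact Hg]. intro n. unfold norm; simpl. rewrite Rabs_Rabsolu. apply Hfg. }
  split. { apply ex_series_Rabs; exact Hfa. }
  eapply Rle_trans; [apply Series_Rabs; exact Hfa|].
  apply Series_le; [|exact Hg]. intro n; split; [apply Rabs_pos|apply Hfg].
Qed.

Lemma ser_lin (f g : nat -> R) c : ex_series f -> ex_series g ->
  Series (fun n => f n + c * g n) = Series f + c * Series g.
Proof.
  intros Hf Hg. rewrite Series_plus; [|exact Hf|].
  - rewrite Series_scal_l. reflexivity.
  - apply (ex_series_scal_l c) in Hg. exact Hg.
Qed.

Definition zw (a : R) (j : Z) : R := exp (- (a * IZR (Z.abs j))).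

Lemma exp_INR n x : exp (INR n * x) = exp x ^ n.
Proof.
  induction n. { simpl. rewrite Rmult_0_l, exp_0; reflexivity. }
  rewrite S_INR, Rmult_plus_distr_r, Rmult_1_l, exp_plus, IHn. simpl. ring.
Qed.

Lemma elle_term_nonneg a u n : 0 <= elle_term a u n.
Proof.
  destruct n; unfold elle_term.
  - apply pow2_ge_0.
  - apply Rmult_le_pos; [left; apply exp_pos|].
    apply Rplus_le_le_0_compat; apply pow2_ge_0.
Qed.

Lemma elle_norm_nonneg a u : 0 <= elle_norm a u.
Proof. apply sqrt_pos. Qed.

Lemma zw_pos a j : 0 < zw a j.
Proof. apply exp_pos. Qed.

Lemma pt_bound a u j : in_elle a u -> Rabs (u j) <= zw a j * elle_norm a u.
Proof.
  intros Hu. unfold elle_norm, zw.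
  set (x := a * IZR (Z.abs j)).
  set (Sm := Series (elle_term a u)).
  assert (Hk : exp (2 * x) * (u j) ^ 2 <= Sm).
  { unfold Sm. eapply Rle_trans; [|apply (term_le_series _ (Z.abs_nat j)); [apply elle_term_nonneg|exact Hu]].
    destruct j as [|p|p]; simpl Z.abs_nat.
    - unfold x. simpl. replace (2 * (a * 0)) with 0 by ring. rewrite exp_0. simpl. lra.
    - destruct (Pos2Nat.is_succ p) as [k Hk]. rewrite Hk. unfold elle_term. rewrite <- Hk.
      rewrite positive_nat_Z. unfold x. rewrite INR_IZR_INZ, positive_nat_Z. simpl Z.abs.
      replace (2 * a * IZR (Z.pos p)) with (2 * (a * IZR (Z.pos p))) by ring.
      pose proof (exp_pos (2 * (a * IZR (Z.pos p)))). pose proof (pow2_ge_0 (u (- Z.pos p)%Z)). nra.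
    - destruct (Pos2Nat.is_succ p) as [k Hk]. rewrite Hk. unfold elle_term. rewrite <- Hk.
      rewrite positive_nat_Z. unfold x. rewrite INR_IZR_INZ, positive_nat_Z. simpl Z.abs. simpl Z.opp.
      replace (2 * a * IZR (Z.pos p)) with (2 * (a * IZR (Z.pos p))) by ring.
      pose proof (exp_pos (2 * (a * IZR (Z.pos p)))). pose proof (pow2_ge_0 (u (Z.pos p))). nra. }
  assert (HS : 0 <= Sm) by (apply series_nonneg; [apply elle_term_nonneg|exact Hu]).
  assert (Hu2 : (u j) ^ 2 <= (exp (- x) * sqrt Sm) ^ 2).
  { rewrite Rpow_mult_distr, pow2_sqrt by exact HS.
    replace (exp (-x) ^ 2) with (/ exp (2 * x)).
    - pose proof (exp_pos (2 * x)). apply (Rmult_le_reg_l (exp (2 * x))); [lra|].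
      field_simplify; lra.
    - replace (2 * x) with (x + x) by ring. rewrite exp_plus, exp_Ropp. simpl. field. apply Rgt_not_eq, exp_pos. }
  rewrite <- (sqrt_pow2 (Rabs (u j))) by apply Rabs_pos.
  rewrite <- (sqrt_pow2 (exp (- x) * sqrt Sm)).
  2:{ apply Rmult_le_pos; [left; apply exp_pos|apply sqrt_pos]. }
  apply sqrt_le_1_alt. rewrite pow2_abs. exact Hu2.
Qed.

Definition ca (a : R) : R := sqrt (2 / (1 - exp (- (2 * a)))).

Lemma ell_from_pt a w B : 0 < a -> 0 <= B ->
  (forall j, Rabs (w j) <= zw a j * zw a j * B) -> in_elle a w /\ elle_norm a w <= ca a * B.
Proof.
  intros Ha HB Hw.
  set (q := exp (- (2 * a))).
  assert (Hq0 : 0 < q) by apply exp_pos.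
  assert (Hq1 : q < 1). { unfold q. rewrite <- exp_0. apply exp_increasing. lra. }
  assert (Hsq : forall j : Z, (w j) ^ 2 <= (zw a j * zw a j * B) ^ 2).
  { intro j. rewrite <- pow2_abs. apply pow_incr. split; [apply Rabs_pos|apply Hw]. }
  assert (Hzw : forall n : nat, zw a (Z.of_nat n) = exp (- a) ^ n /\ zw a (- Z.of_nat n)%Z = exp (- a) ^ n).
  { intro n. unfold zw. rewrite Z.abs_opp, Z.abs_eq by lia. rewrite <- INR_IZR_INZ, <- exp_INR.
    split; f_equal; ring. }
  assert (Hea : exp (- a) ^ 2 = q). { unfold q. rewrite <- exp_INR. f_equal. simpl. ring. }
  assert (Ht : forall n, elle_term a w n <= (2 * B ^ 2) * q ^ n).
  { intro n. destruct n as [|k].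
    - unfold elle_term. specialize (Hsq 0%Z). unfold zw in Hsq.
      replace (- (a * IZR (Z.abs 0))) with 0 in Hsq by (simpl; ring). rewrite exp_0 in Hsq. simpl pow in *. nra.
    - unfold elle_term. set (n := S k).
      destruct (Hzw n) as [H1 H2]. pose proof (Hsq (Z.of_nat n)) as Hs1. pose proof (Hsq (- Z.of_nat n)%Z) as Hs2.
      rewrite H1 in Hs1. rewrite H2 in Hs2.
      set (t := exp (- a) ^ n) in *.
      assert (Ht0 : 0 <= t) by (unfold t; apply pow_le; left; apply exp_pos).
      assert (E : exp (2 * a * INR n) * t ^ 2 = 1).
      { unfold t. rewrite <- exp_INR.
        replace ((exp (INR n * - a)) ^ 2) with (exp (INR n * - a) * exp (INR n * - a)) by ring.
        rewrite <- !exp_plus.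
        replace (2 * a * INR n + (INR n * - a + INR n * - a)) with 0 by ring. apply exp_0. }
      assert (Hqn : q ^ n = t ^ 2). { unfold t. rewrite <- Hea, <- !pow_mult. f_equal. lia. }
      rewrite Hqn.
      assert (Hb : (t * t * B) ^ 2 = t ^ 2 * (t ^ 2 * B ^ 2)) by ring.
      rewrite Hb in Hs1, Hs2.
      pose proof (exp_pos (2 * a * INR n)) as Hex.
      apply Rle_trans with (exp (2 * a * INR n) * (2 * (t ^ 2 * (t ^ 2 * B ^ 2)))).
      + apply Rmult_le_compat_l; lra.
      + replace (exp (2 * a * INR n) * (2 * (t ^ 2 * (t ^ 2 * B ^ 2)))) with
          ((exp (2 * a * INR n) * t ^ 2) * (2 * B ^ 2 * t ^ 2)) by ring.
        rewrite E. lra. }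
  assert (Hg : is_series (fun n => (2 * B ^ 2) * q ^ n) ((2 * B ^ 2) * / (1 - q))).
  { assert (Hq : Rabs q < 1) by (rewrite Rabs_pos_eq; lra).
    pose proof (@is_series_scal_l R_AbsRing R_NormedModule (2 * B ^ 2) _ _ (is_series_geom q Hq)) as G.
    exact G. }
  assert (Hex : ex_series (elle_term a w)).
  { apply (@ex_series_le R_AbsRing R_CompleteNormedModule _ (fun n => (2 * B ^ 2) * q ^ n)).
    - intro n. unfold norm; simpl. rewrite Rabs_pos_eq by apply elle_term_nonneg. apply Ht.
    - eexists; exact Hg. }
  split; [exact Hex|].
  assert (HS : Series (elle_term a w) <= (2 * B ^ 2) * / (1 - q)).
  { rewrite <- (is_series_unique _ _ Hg). apply Series_le; [|eexists; exact Hg].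
    intro n; split; [apply elle_term_nonneg|apply Ht]. }
  unfold elle_norm, ca. fold q.
  rewrite <- (sqrt_pow2 B HB) at 1. rewrite <- sqrt_mult.
  - apply sqrt_le_1_alt. unfold Rdiv. lra.
  - unfold Rdiv. apply Rmult_le_pos; [lra|]. left; apply Rinv_0_lt_compat; lra.
  - apply pow2_ge_0.
Qed.

Lemma tail_partial (a : nat -> R) k N :
  (forall n, 0 <= a n) -> sum_f_R0 (fun n => a (n + k)%nat) N <= sum_f_R0 a (N + k).
Proof.
  intros Ha. induction N.
  - simpl. apply term_le_sum; exact Ha.
  - simpl. lra.
Qed.

Lemma tail_le_series (a : nat -> R) k N :
  (forall n, 0 <= a n) -> ex_series a -> sum_f_R0 (fun n => a (n + k)%nat) N <= Series a.
Proof.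
  intros Ha He. eapply Rle_trans; [apply tail_partial; exact Ha|]. apply partial_le_series; auto.
Qed.

Lemma series_sum_comm (f : nat -> nat -> R) N :
  (forall n, ex_series (f n)) ->
  ex_series (fun k => sum_f_R0 (fun n => f n k) N) /\
  sum_f_R0 (fun n => Series (f n)) N = Series (fun k => sum_f_R0 (fun n => f n k) N).
Proof.
  intros Hf. induction N.
  - simpl. split; [apply Hf|reflexivity].
  - destruct IHN as [He Heq]. simpl. split.
    + apply (@ex_series_plus R_AbsRing R_NormedModule); [exact He|apply Hf].
    + rewrite Heq, Series_plus; [reflexivity|exact He|apply Hf].
Qed.

Lemma ex_abs_nonneg (f g : nat -> R) :
  (forall n, 0 <= f n <= g n) -> ex_series g -> ex_series f.
Proof.
  intros H Hg. apply (ser_abs f g); [|exact Hg]. intro n. rewrite Rabs_pos_eq; apply H.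
Qed.

Section Aux.
Variables (r : R) (e G : nat -> R).
Hypotheses (Hr : 0 < r) (He0 : forall n, 0 <= e n) (HG0 : forall n, 0 <= G n)
  (He : ex_series (fun n => r ^ n * e n)) (HG : ex_series (fun n => r ^ n * G n)).

Let Se := Series (fun n => r ^ n * e n).
Let SG := Series (fun n => r ^ n * G n).

Lemma rpos n : 0 < r ^ n. Proof. apply pow_lt; exact Hr. Qed.

Lemma reN n : 0 <= r ^ n * e n. Proof. apply Rmult_le_pos; [left; apply rpos|apply He0]. Qed.
Lemma rGN n : 0 <= r ^ n * G n. Proof. apply Rmult_le_pos; [left; apply rpos|apply HG0]. Qed.

Lemma auxA : ex_series (fun n => r ^ n * sum_f_R0 (fun n1 => e n1 * G (n - n1)%nat) n) /\
  Series (fun n => r ^ n * sum_f_R0 (fun n1 => e n1 * G (n - n1)%nat) n) = Se * SG.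
Proof.
  assert (Hm := is_series_mult (fun n => r ^ n * e n) (fun n => r ^ n * G n) Se SG
    (Series_correct _ He) (Series_correct _ HG)).
  assert (Hm' : is_series (fun n => r ^ n * sum_f_R0 (fun n1 => e n1 * G (n - n1)%nat) n) (Se * SG)).
  { eapply is_series_ext; [|apply Hm].
    - intro n. rewrite scal_sum. apply sum_eq. intros i Hi.
      replace (r ^ n) with (r ^ i * r ^ (n - i)) by (rewrite <- pow_add; f_equal; lia). ring.
    - eapply ex_series_ext; [|exact He]. intro n. rewrite Rabs_pos_eq; [reflexivity|apply reN].
    - eapply ex_series_ext; [|exact HG]. intro n. rewrite Rabs_pos_eq; [reflexivity|apply rGN]. }
  split; [eexists; exact Hm'|apply is_series_unique; exact Hm'].
Qed.

Lemma auxB_ex n : ex_series (fun k => e (n + k)%nat * ((r * r) ^ k * G k)).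
Proof.
  apply (ex_abs_nonneg _ (fun k => (Se / r ^ n) * (r ^ k * G k))).
  - intro k. split.
    + apply Rmult_le_pos; [apply He0|]. apply Rmult_le_pos; [apply pow_le; nra|apply HG0].
    + pose proof (term_le_series _ (n + k) reN He) as T. fold Se in T. cbv beta in T.
      pose proof (rpos n). pose proof (rpos k).
      rewrite pow_add in T. rewrite Rpow_mult_distr.
      apply (Rmult_le_reg_l (r ^ n)); [lra|]. unfold Rdiv.
      replace (r ^ n * (Se * / r ^ n * (r ^ k * G k))) with (Se * (r ^ k * G k)) by (field; lra).
      replace (r ^ n * (e (n + k)%nat * (r ^ k * r ^ k * G k))) with
        ((r ^ n * r ^ k * e (n + k)%nat) * (r ^ k * G k)) by ring.
      apply Rmult_le_compat_r; [apply rGN|exact T].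
  - apply (ex_series_scal_l (Se / r ^ n)) in HG. exact HG.
Qed.

Lemma auxB : ex_series (fun n => r ^ n * Series (fun k => e (n + k)%nat * ((r * r) ^ k * G k))) /\
  Series (fun n => r ^ n * Series (fun k => e (n + k)%nat * ((r * r) ^ k * G k))) <= Se * SG.
Proof.
  apply ser_bound.
  - intro n. apply Rmult_le_pos; [left; apply rpos|]. apply series_nonneg; [|apply auxB_ex].
    intro k. apply Rmult_le_pos; [apply He0|]. apply Rmult_le_pos; [apply pow_le; nra|apply HG0].
  - intro N.
    assert (Hx : forall n, ex_series (fun k => r ^ n * (e (n + k)%nat * ((r * r) ^ k * G k)))).
    { intro n. pose proof (auxB_ex n) as H. apply (ex_series_scal_l (r ^ n)) in H. exact H. }
    destruct (series_sum_comm _ N Hx) as [Hex Heq].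
    rewrite (sum_eq _ (fun n => Series (fun k => r ^ n * (e (n + k)%nat * ((r * r) ^ k * G k))))).
    2:{ intros i _. rewrite Series_scal_l. reflexivity. }
    rewrite Heq. replace (Se * SG) with (Series (fun k => Se * (r ^ k * G k))) by (rewrite Series_scal_l; reflexivity).
    apply Series_le.
    + intro k. split.
      * apply sum_nonneg. intro n. apply Rmult_le_pos; [left; apply rpos|].
        apply Rmult_le_pos; [apply He0|]. apply Rmult_le_pos; [apply pow_le; nra|apply HG0].
      * rewrite (sum_eq _ (fun n => (r ^ (n + k) * e (n + k)%nat) * (r ^ k * G k))).
        2:{ intros i _. rewrite pow_add, Rpow_mult_distr. ring. }
        rewrite <- (Rmult_comm (r ^ k * G k)), <- scal_sum.
        apply Rmult_le_compat_l; [apply rGN|].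
        apply (tail_le_series (fun n => r ^ n * e n)); [apply reN|exact He].
    + apply (ex_series_scal_l Se) in HG. exact HG.
Qed.

Lemma auxC_ex n : ex_series (fun m => e (S m) * ((r * r) ^ (S m) * G (n + S m)%nat)).
Proof.
  apply (ex_abs_nonneg _ (fun m => (SG / r ^ n) * (r ^ (S m) * e (S m)))).
  - intro k. split.
    + apply Rmult_le_pos; [apply He0|]. apply Rmult_le_pos; [apply pow_le; nra|apply HG0].
    + pose proof (term_le_series _ (n + S k) rGN HG) as T. fold SG in T. cbv beta in T.
      pose proof (rpos n). pose proof (rpos (S k)).
      rewrite pow_add in T. rewrite Rpow_mult_distr.
      apply (Rmult_le_reg_l (r ^ n)); [lra|]. unfold Rdiv.
      replace (r ^ n * (SG * / r ^ n * (r ^ S k * e (S k)))) with (SG * (r ^ S k * e (S k))) by (field; lra).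
      replace (r ^ n * (e (S k) * (r ^ S k * r ^ S k * G (n + S k)%nat))) with
        ((r ^ n * r ^ S k * G (n + S k)%nat) * (r ^ S k * e (S k))) by ring.
      apply Rmult_le_compat_r; [apply reN|exact T].
  - apply (ex_series_scal_l (SG / r ^ n)) in He as H. apply ex_series_incr_1 in H. exact H.
Qed.

Lemma auxC : ex_series (fun n => r ^ n * Series (fun m => e (S m) * ((r * r) ^ (S m) * G (n + S m)%nat))) /\
  Series (fun n => r ^ n * Series (fun m => e (S m) * ((r * r) ^ (S m) * G (n + S m)%nat))) <= Se * SG.
Proof.
  apply ser_bound.
  - intro n. apply Rmult_le_pos; [left; apply rpos|]. apply series_nonneg; [|apply auxC_ex].
    intro k. apply Rmult_le_pos; [apply He0|]. apply Rmult_le_pos; [apply pow_le; nra|apply HG0].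
  - intro N.
    assert (Hx : forall n, ex_series (fun m => r ^ n * (e (S m) * ((r * r) ^ (S m) * G (n + S m)%nat)))).
    { intro n. pose proof (auxC_ex n) as H. apply (ex_series_scal_l (r ^ n)) in H. exact H. }
    destruct (series_sum_comm _ N Hx) as [Hex Heq].
    rewrite (sum_eq _ (fun n => Series (fun m => r ^ n * (e (S m) * ((r * r) ^ (S m) * G (n + S m)%nat))))).
    2:{ intros i _. rewrite Series_scal_l. reflexivity. }
    rewrite Heq.
    assert (Hsh : ex_series (fun m => r ^ S m * e (S m))) by (apply ex_series_incr_1 in He; exact He).
    apply Rle_trans with (Series (fun m => SG * (r ^ S m * e (S m)))).
    + apply Series_le.
      * intro k. split.
        -- apply sum_nonneg. intro n. apply Rmult_le_pos; [left; apply rpos|].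
           apply Rmult_le_pos; [apply He0|]. apply Rmult_le_pos; [apply pow_le; nra|apply HG0].
        -- rewrite (sum_eq _ (fun n => (r ^ (n + S k) * G (n + S k)%nat) * (r ^ S k * e (S k)))).
           2:{ intros i _. rewrite pow_add, Rpow_mult_distr. ring. }
           rewrite <- (Rmult_comm (r ^ S k * e (S k))), <- scal_sum.
           apply Rmult_le_compat_l; [apply reN|].
           apply (tail_le_series (fun n => r ^ n * G n)); [apply rGN|exact HG].
      * apply (ex_series_scal_l SG) in Hsh. exact Hsh.
    + rewrite Series_scal_l, Rmult_comm. apply Rmult_le_compat_r.
      * apply series_nonneg; [apply rGN|exact HG].
      * unfold Se. rewrite (Series_incr_1 _ He). pose proof (reN 0). simpl pow. lra.
Qed.

End Aux.

Fixpoint Gam (r c : R) (q : nat) (es : nat -> nat -> R) (n : nat) : R :=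
  match q with
  | O => es O n
  | S q' => c * (sum_f_R0 (fun n1 => es O n1 * Gam r c q' (fun i => es (S i)) (n - n1)%nat) n
     + Series (fun k => es O (n + k)%nat * ((r * r) ^ k * Gam r c q' (fun i => es (S i)) k))
     + Series (fun m => es O (S m) * ((r * r) ^ (S m) * Gam r c q' (fun i => es (S i)) (n + S m)%nat)))
  end.

Lemma prodR_shift n f : prodR (S n) f = f O * prodR n (fun i => f (S i)).
Proof. induction n; simpl in *. ring. rewrite IHn. ring. Qed.

Lemma prodR_nonneg n f : (forall i, (i < n)%nat -> 0 <= f i) -> 0 <= prodR n f.
Proof. intros H; induction n; simpl; [lra|]. apply Rmult_le_pos; auto. Qed.

Lemma scal_gam (r c : R) : 0 < r -> 0 <= c -> forall q es,
  (forall i n, 0 <= es i n) -> (forall i, (i <= q)%nat -> ex_series (fun n => r ^ n * es i n)) ->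
  (forall n, 0 <= Gam r c q es n) /\ ex_series (fun n => r ^ n * Gam r c q es n) /\
  Series (fun n => r ^ n * Gam r c q es n) <=
    (3 * c) ^ q * prodR (S q) (fun i => Series (fun n => r ^ n * es i n)).
Proof.
  intros Hr Hc q. induction q as [|q IH]; intros es Hes Hex.
  - simpl. split; [intro n; apply Hes|]. split; [apply Hex; lia|lra].
  - destruct (IH (fun i => es (S i))) as [HG0 [HGe HGs]].
    { intros; apply Hes. } { intros i Hi; apply Hex; lia. }
    set (G := Gam r c q (fun i => es (S i))) in *.
    assert (He0 : forall n, 0 <= es O n) by (intro; apply Hes).
    assert (He : ex_series (fun n => r ^ n * es O n)) by (apply Hex; lia).
    destruct (auxA r (es O) G Hr He0 HG0 He HGe) as [HAe HAs].
    destruct (auxB r (es O) G Hr He0 HG0 He HGe) as [HBe HBs].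
    destruct (auxC r (es O) G Hr He0 HG0 He HGe) as [HCe HCs].
    set (Se := Series (fun n => r ^ n * es O n)) in *.
    set (SG := Series (fun n => r ^ n * G n)) in *.
    assert (HSe : 0 <= Se) by (apply series_nonneg; [intro; apply Rmult_le_pos; [apply pow_le; lra|apply Hes]|exact He]).
    assert (Hnn : forall n, 0 <= sum_f_R0 (fun n1 => es O n1 * G (n - n1)%nat) n
        + Series (fun k => es O (n + k)%nat * ((r * r) ^ k * G k))
        + Series (fun m => es O (S m) * ((r * r) ^ (S m) * G (n + S m)%nat))).
    { intro n. pose proof (pow_le (r*r)) as Hp.
      assert (0 <= sum_f_R0 (fun n1 => es O n1 * G (n - n1)%nat) n).
      { apply sum_nonneg. intro; apply Rmult_le_pos; auto. }
      assert (0 <= Series (fun k => es O (n + k)%nat * ((r * r) ^ k * G k))).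
      { apply series_nonneg; [|apply auxB_ex; auto]. intro; apply Rmult_le_pos; auto.
        apply Rmult_le_pos; auto; apply Hp; nra. }
      assert (0 <= Series (fun m => es O (S m) * ((r * r) ^ (S m) * G (n + S m)%nat))).
      { apply series_nonneg; [|apply auxC_ex; auto]. intro; apply Rmult_le_pos; auto.
        apply Rmult_le_pos; auto; apply Hp; nra. }
      lra. }
    assert (Hsplit : forall n, r ^ n * Gam r c (S q) es n =
       c * (r ^ n * sum_f_R0 (fun n1 => es O n1 * G (n - n1)%nat) n
        + r ^ n * Series (fun k => es O (n + k)%nat * ((r * r) ^ k * G k))
        + r ^ n * Series (fun m => es O (S m) * ((r * r) ^ (S m) * G (n + S m)%nat)))).
    { intro n. cbn [Gam]. fold G. ring. }
    assert (Hex3 : ex_series (fun n => r ^ n * sum_f_R0 (fun n1 => es O n1 * G (n - n1)%nat) n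
        + r ^ n * Series (fun k => es O (n + k)%nat * ((r * r) ^ k * G k))
        + r ^ n * Series (fun m => es O (S m) * ((r * r) ^ (S m) * G (n + S m)%nat)))).
    { apply (@ex_series_plus R_AbsRing R_NormedModule); [|exact HCe].
      apply (@ex_series_plus R_AbsRing R_NormedModule); [exact HAe|exact HBe]. }
    split; [|split].
    + intro n. cbn [Gam]. fold G. apply Rmult_le_pos; [exact Hc|apply Hnn].
    + eapply ex_series_ext. { intro n. symmetry. apply Hsplit. }
      apply (ex_series_scal_l c) in Hex3. exact Hex3.
    + rewrite (Series_ext _ _ Hsplit), Series_scal_l.
      rewrite Series_plus; [|apply (@ex_series_plus R_AbsRing R_NormedModule); [exact HAe|exact HBe]|exact HCe].
      rewrite Series_plus; [|exact HAe|exact HBe].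
      rewrite HAs.
      rewrite prodR_shift. fold Se.
      assert (HP : 0 <= prodR (S q) (fun i => Series (fun n => r ^ n * es (S i) n))).
      { apply prodR_nonneg. intros i Hi. apply series_nonneg.
        - intro; apply Rmult_le_pos; [apply pow_le; lra|apply Hes].
        - apply Hex; lia. }
      assert (HSG : Se * SG <= Se * ((3 * c) ^ q * prodR (S q) (fun i => Series (fun n => r ^ n * es (S i) n)))).
      { apply Rmult_le_compat_l; [exact HSe|exact HGs]. }
      apply Rle_trans with (c * (Se * SG + Se * SG + Se * SG)).
      * apply Rmult_le_compat_l; [exact Hc|lra].
      * apply Rle_trans with (3 * c * (Se * ((3 * c) ^ q * prodR (S q) (fun i => Series (fun n => r ^ n * es (S i) n))))).
        { apply (Rmult_le_compat_l (3 * c)) in HSG; lra. }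
        right; simpl pow; ring.
Qed.

Definition shiftw (k : nat) (w : nat -> R) : nat -> R := fun E => w (k + E)%nat.

Fixpoint Phi (q : nat) (w : nat -> R) (vs : nat -> V) : V :=
  match q with
  | O => fun n j => w O * vs O n j
  | S q' => fun n j =>
    sum_f_R0 (fun n1 => vs O n1 j * Phi q' w (fun i => vs (S i)) (n - n1)%nat j) n
    + Series (fun k => vs O (n + k)%nat j * Phi q' (shiftw k w) (fun i => vs (S i)) k j)
    + Series (fun m => vs O (S m) j * Phi q' (shiftw (S m) w) (fun i => vs (S i)) (n + S m)%nat j)
  end.

Definition es (a : R) (vs : nat -> V) : nat -> nat -> R := fun i n => elle_norm a (vs i n).

Definition goodw (r Om : R) (w : nat -> R) : Prop := 0 <= Om /\ forall E, Rabs (w E) <= Om * (r * r) ^ E.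

Lemma goodw_shift r Om w k : goodw r Om w -> goodw r (Om * (r * r) ^ k) (shiftw k w).
Proof.
  intros [H0 H]. split.
  - apply Rmult_le_pos; [exact H0|]. apply pow_le. nra.
  - intro E. unfold shiftw. rewrite Rmult_assoc, <- pow_add. apply H.
Qed.

Lemma elle_scal a c u : in_elle a u ->
  in_elle a (fun j => c * u j) /\ elle_norm a (fun j => c * u j) = Rabs c * elle_norm a u.
Proof.
  intros Hu.
  assert (Ht : forall n, elle_term a (fun j => c * u j) n = c ^ 2 * elle_term a u n).
  { intro n; destruct n; unfold elle_term; ring. }
  split.
  - unfold in_elle. eapply ex_series_ext; [intro n; symmetry; apply Ht|].
    apply (ex_series_scal_l (c ^ 2)) in Hu. exact Hu.
  - unfold elle_norm. rewrite (Series_ext _ _ Ht), Series_scal_l.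
    rewrite sqrt_mult_alt by apply pow2_ge_0.
    rewrite <- Rsqr_pow2, sqrt_Rsqr_abs. reflexivity.
Qed.

Lemma prod_pt a u v j : in_elle a u -> in_elle a v ->
  Rabs (u j * v j) <= zw a j * zw a j * (elle_norm a u * elle_norm a v).
Proof.
  intros Hu Hv. rewrite Rabs_mult.
  pose proof (pt_bound a u j Hu). pose proof (pt_bound a v j Hv).
  replace (zw a j * zw a j * (elle_norm a u * elle_norm a v)) with
    ((zw a j * elle_norm a u) * (zw a j * elle_norm a v)) by ring.
  apply Rmult_le_compat; try apply Rabs_pos; assumption.
Qed.

Lemma args_tail p a r vs : args_inX (S p) a r vs -> args_inX p a r (fun i => vs (S i)).
Proof. intros H k Hk. apply H. lia. Qed.

Lemma es_ex p a r vs : args_inX (S p) a r vs ->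
  forall i, (i <= p)%nat -> ex_series (fun n => r ^ n * es a vs i n).
Proof. intros H i Hi. apply (H i). lia. Qed.

Lemma es_nonneg a vs i n : 0 <= es a vs i n.
Proof. apply elle_norm_nonneg. Qed.

Lemma ex_scal (c : R) (f : nat -> R) : ex_series f -> ex_series (fun n => c * f n).
Proof. intro H. apply (ex_series_scal_l c) in H. exact H. Qed.

Section Step.
Variables (a r : R) (Ha : 0 < a) (Hr : 0 < r).

Let c := ca a.
Lemma ca_nonneg : 0 <= ca a. Proof. apply sqrt_pos. Qed.

Lemma phi_step q w Om vs :
  goodw r Om w -> args_inX (S (S q)) a r vs ->
  (forall Om' w', goodw r Om' w' -> forall n, in_elle a (Phi q w' (fun i => vs (S i)) n) /\
      elle_norm a (Phi q w' (fun i => vs (S i)) n) <= Om' * Gam r c q (es a (fun i => vs (S i))) n) ->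
  forall n j,
  let G := Gam r c q (es a (fun i => vs (S i))) in
  let z := zw a j * zw a j in
  Rabs (sum_f_R0 (fun n1 => vs O n1 j * Phi q w (fun i => vs (S i)) (n - n1)%nat j) n)
    <= z * (Om * sum_f_R0 (fun n1 => es a vs O n1 * G (n - n1)%nat) n) /\
  ex_series (fun k => vs O (n + k)%nat j * Phi q (shiftw k w) (fun i => vs (S i)) k j) /\
  Rabs (Series (fun k => vs O (n + k)%nat j * Phi q (shiftw k w) (fun i => vs (S i)) k j))
    <= z * (Om * Series (fun k => es a vs O (n + k)%nat * ((r * r) ^ k * G k))) /\
  ex_series (fun m => vs O (S m) j * Phi q (shiftw (S m) w) (fun i => vs (S i)) (n + S m)%nat j) /\
  Rabs (Series (fun m => vs O (S m) j * Phi q (shiftw (S m) w) (fun i => vs (S i)) (n + S m)%nat j))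
    <= z * (Om * Series (fun m => es a vs O (S m) * ((r * r) ^ (S m) * G (n + S m)%nat))).
Proof.
  intros Hw Hvs IH n j G z.
  assert (Hv0 : inX a r (vs O)) by (apply Hvs; lia).
  destruct (scal_gam r c Hr ca_nonneg q (es a (fun i => vs (S i)))) as [HG0 [HGe _]].
  { intros; apply es_nonneg. } { intros i Hi. apply (es_ex (S q) a r vs Hvs (S i)). lia. }
  fold G in HG0, HGe.
  assert (He0 : forall n, 0 <= es a vs O n) by (intro; apply es_nonneg).
  assert (He : ex_series (fun n => r ^ n * es a vs O n)) by (apply Hv0).
  assert (Hz : 0 <= z) by (unfold z; pose proof (zw_pos a j); nra).
  destruct Hw as [HOm HwE].
  assert (Hrr : forall k, 0 <= (r * r) ^ k) by (intro; apply pow_le; nra).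
  split; [|split; [|split; [|split]]].
  - eapply Rle_trans; [apply sum_f_R0_triangle|].
    rewrite scal_sum, scal_sum. apply sum_Rle. intros n1 _.
    destruct (IH Om w (conj HOm HwE) (n - n1)%nat) as [Hi Hb].
    eapply Rle_trans; [apply prod_pt; [apply Hv0|exact Hi]|].
    fold z. pose proof (elle_norm_nonneg a (vs O n1)).
    apply Rle_trans with (z * (elle_norm a (vs O n1) * (Om * G (n - n1)%nat))).
    + apply Rmult_le_compat_l; [exact Hz|]. apply Rmult_le_compat_l; auto.
    + right; unfold es; ring.
  - apply (ser_abs _ (fun k => z * (Om * (es a vs O (n + k)%nat * ((r * r) ^ k * G k))))).
    + intro k. destruct (IH _ _ (goodw_shift r Om w k (conj HOm HwE)) k) as [Hi Hb].
      eapply Rle_trans; [apply prod_pt; [apply Hv0|exact Hi]|]. fold z.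
      pose proof (elle_norm_nonneg a (vs O (n + k)%nat)).
      replace (z * (Om * (es a vs O (n + k)%nat * ((r * r) ^ k * G k)))) with
        (z * (elle_norm a (vs O (n + k)%nat) * (Om * (r * r) ^ k * G k))) by (unfold es; ring).
      apply Rmult_le_compat_l; [exact Hz|]. apply Rmult_le_compat_l; auto.
    + apply ex_scal, ex_scal. apply auxB_ex; auto.
  - eapply Rle_trans.
    + apply (ser_abs _ (fun k => z * (Om * (es a vs O (n + k)%nat * ((r * r) ^ k * G k))))).
      * intro k. destruct (IH _ _ (goodw_shift r Om w k (conj HOm HwE)) k) as [Hi Hb].
        eapply Rle_trans; [apply prod_pt; [apply Hv0|exact Hi]|]. fold z.
        pose proof (elle_norm_nonneg a (vs O (n + k)%nat)).
        replace (z * (Om * (es a vs O (n + k)%nat * ((r * r) ^ k * G k)))) with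
          (z * (elle_norm a (vs O (n + k)%nat) * (Om * (r * r) ^ k * G k))) by (unfold es; ring).
        apply Rmult_le_compat_l; [exact Hz|]. apply Rmult_le_compat_l; auto.
      * apply ex_scal, ex_scal. apply auxB_ex; auto.
    + rewrite Series_scal_l, Series_scal_l. right; reflexivity.
  - apply (ser_abs _ (fun m => z * (Om * (es a vs O (S m) * ((r * r) ^ (S m) * G (n + S m)%nat))))).
    + intro k. destruct (IH _ _ (goodw_shift r Om w (S k) (conj HOm HwE)) (n + S k)%nat) as [Hi Hb].
      eapply Rle_trans; [apply prod_pt; [apply Hv0|exact Hi]|]. fold z.
      pose proof (elle_norm_nonneg a (vs O (S k))).
      replace (z * (Om * (es a vs O (S k) * ((r * r) ^ (S k) * G (n + S k)%nat)))) with
        (z * (elle_norm a (vs O (S k)) * (Om * (r * r) ^ (S k) * G (n + S k)%nat))) by (unfold es; ring).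
      apply Rmult_le_compat_l; [exact Hz|]. apply Rmult_le_compat_l; auto.
    + apply ex_scal, ex_scal. apply auxC_ex; auto.
  - eapply Rle_trans.
    + apply (ser_abs _ (fun m => z * (Om * (es a vs O (S m) * ((r * r) ^ (S m) * G (n + S m)%nat))))).
      * intro k. destruct (IH _ _ (goodw_shift r Om w (S k) (conj HOm HwE)) (n + S k)%nat) as [Hi Hb].
        eapply Rle_trans; [apply prod_pt; [apply Hv0|exact Hi]|]. fold z.
        pose proof (elle_norm_nonneg a (vs O (S k))).
        replace (z * (Om * (es a vs O (S k) * ((r * r) ^ (S k) * G (n + S k)%nat)))) with
          (z * (elle_norm a (vs O (S k)) * (Om * (r * r) ^ (S k) * G (n + S k)%nat))) by (unfold es; ring).
        apply Rmult_le_compat_l; [exact Hz|]. apply Rmult_le_compat_l; auto.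
      * apply ex_scal, ex_scal. apply auxC_ex; auto.
    + rewrite Series_scal_l, Series_scal_l. right; reflexivity.
Qed.

Lemma phi_bound : forall q Om w vs, goodw r Om w -> args_inX (S q) a r vs ->
  forall n, in_elle a (Phi q w vs n) /\ elle_norm a (Phi q w vs n) <= Om * Gam r c q (es a vs) n.
Proof.
  induction q as [|q IH]; intros Om w vs Hw Hvs n.
  - assert (Hv0 : inX a r (vs O)) by (apply Hvs; lia).
    destruct (elle_scal a (w O) (vs O n) (proj1 Hv0 n)) as [H1 H2].
    cbn [Phi Gam]. split; [exact H1|]. rewrite H2.
    destruct Hw as [HOm HwE]. specialize (HwE O). simpl pow in HwE. rewrite Rmult_1_r in HwE.
    apply Rmult_le_compat_r; [apply elle_norm_nonneg|exact HwE].
  - pose proof (phi_step q w Om vs Hw Hvs (fun Om' w' Hw' => IH Om' w' (fun i => vs (S i)) Hw' (args_tail _ _ _ _ Hvs))) as St.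
    set (G := Gam r c q (es a (fun i => vs (S i)))) in *.
    set (D := sum_f_R0 (fun n1 => es a vs O n1 * G (n - n1)%nat) n
       + Series (fun k => es a vs O (n + k)%nat * ((r * r) ^ k * G k))
       + Series (fun m => es a vs O (S m) * ((r * r) ^ (S m) * G (n + S m)%nat))).
    assert (Hpt : forall j, Rabs (Phi (S q) w vs n j) <= zw a j * zw a j * (Om * D)).
    { intro j. destruct (St n j) as [A1 [_ [A2 [_ A3]]]]. cbn [Phi].
      eapply Rle_trans; [apply Rabs_triang|]. eapply Rle_trans; [apply Rplus_le_compat_r, Rabs_triang|].
      unfold D. fold G in A1, A2, A3. lra. }
    assert (HB : 0 <= Om * D).
    { specialize (Hpt 0%Z). pose proof (Rabs_pos (Phi (S q) w vs n 0%Z)). pose proof (zw_pos a 0).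
      assert (Hx : 0 < zw a 0 * zw a 0) by nra.
      apply (Rmult_le_reg_l (zw a 0 * zw a 0)); [exact Hx|]. lra. }
    destruct (ell_from_pt a (Phi (S q) w vs n) (Om * D) Ha HB Hpt) as [H1 H2].
    split; [exact H1|]. eapply Rle_trans; [exact H2|].
    right. cbn [Gam]. fold c. change (Gam r c q (fun i => es a vs (S i))) with G. unfold D. ring.
Qed.

End Step.

Lemma sum_scal_l (f : nat -> R) c N : sum_f_R0 (fun i => c * f i) N = c * sum_f_R0 f N.
Proof. induction N; simpl; [ring|rewrite IHN; ring]. Qed.

Lemma phi_homog : forall q w vs c n j, Phi q (fun E => c * w E) vs n j = c * Phi q w vs n j.
Proof.
  induction q as [|q IH]; intros w vs c n j.
  - cbn [Phi]. ring.
  - cbn [Phi].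
    rewrite (sum_eq _ (fun n1 => c * (vs O n1 j * Phi q w (fun i => vs (S i)) (n - n1)%nat j))).
    2:{ intros i _. rewrite IH. ring. }
    rewrite (Series_ext _ (fun k => c * (vs O (n + k)%nat j * Phi q (shiftw k w) (fun i => vs (S i)) k j))).
    2:{ intro k. change (shiftw k (fun E => c * w E)) with (fun E => c * shiftw k w E). rewrite IH. ring. }
    rewrite (Series_ext (fun m => vs O (S m) j * Phi q (shiftw (S m) (fun E => c * w E)) (fun i => vs (S i)) (n + S m)%nat j)
       (fun m => c * (vs O (S m) j * Phi q (shiftw (S m) w) (fun i => vs (S i)) (n + S m)%nat j))).
    2:{ intro k. change (shiftw (S k) (fun E => c * w E)) with (fun E => c * shiftw (S k) w E). rewrite IH. ring. }
    rewrite !Series_scal_l.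
    rewrite sum_scal_l. ring.
Qed.

Lemma args_upd p a r vs i u : args_inX p a r vs -> inX a r u -> args_inX p a r (upd vs i u).
Proof. intros H Hu k Hk. unfold upd. destruct (Nat.eqb k i); auto. Qed.

Section Ops.
Variables (a r : R) (Ha : 0 < a) (Hr : 0 < r).

Lemma phi_X q Om w vs : goodw r Om w -> args_inX (S q) a r vs ->
  inX a r (Phi q w vs) /\
  Xnorm a r (Phi q w vs) <= Om * (3 * ca a) ^ q * prodR (S q) (fun i => Xnorm a r (vs i)).
Proof.
  intros Hw Hvs.
  pose proof (phi_bound a r Ha Hr q Om w vs Hw Hvs) as B.
  destruct (scal_gam r (ca a) Hr (ca_nonneg a) q (es a vs)) as [HG0 [HGe HGs]].
  { intros; apply es_nonneg. } { apply (es_ex q a r vs Hvs). }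
  destruct Hw as [HOm _].
  assert (Hle : forall n, Rabs (r ^ n * elle_norm a (Phi q w vs n)) <= Om * (r ^ n * Gam r (ca a) q (es a vs) n)).
  { intro n. rewrite Rabs_pos_eq.
    - destruct (B n) as [_ Hb]. pose proof (pow_lt r n Hr).
      replace (Om * (r ^ n * Gam r (ca a) q (es a vs) n)) with (r ^ n * (Om * Gam r (ca a) q (es a vs) n)) by ring.
      apply Rmult_le_compat_l; lra.
    - apply Rmult_le_pos; [apply pow_le; lra|apply elle_norm_nonneg]. }
  destruct (ser_abs _ _ Hle (ex_scal Om _ HGe)) as [Hex Hs].
  split; [split; [intro n; apply (B n)|exact Hex]|].
  unfold Xnorm. rewrite Rabs_pos_eq in Hs.
  2:{ apply series_nonneg; [|exact Hex]. intro; apply Rmult_le_pos; [apply pow_le; lra|apply elle_norm_nonneg]. }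
  eapply Rle_trans; [exact Hs|]. rewrite Series_scal_l. rewrite Rmult_assoc.
  apply Rmult_le_compat_l; [exact HOm|]. exact HGs.
Qed.

Lemma phi_plbound q Om w : goodw r Om w ->
  pl_bound (S q) a r (Phi q w) (Om * (3 * ca a) ^ q).
Proof. intros Hw vs Hvs. apply phi_X; auto. Qed.

Lemma phi_conv q Om w vs : goodw r Om w -> args_inX (S (S q)) a r vs -> forall n j,
  ex_series (fun k => vs O (n + k)%nat j * Phi q (shiftw k w) (fun i => vs (S i)) k j) /\
  ex_series (fun m => vs O (S m) j * Phi q (shiftw (S m) w) (fun i => vs (S i)) (n + S m)%nat j).
Proof.
  intros Hw Hvs n j.
  pose proof (phi_step a r Hr q w Om vs Hw Hvs
     (fun Om' w' Hw' => phi_bound a r Ha Hr q Om' w' (fun i => vs (S i)) Hw' (args_tail _ _ _ _ Hvs)) n j) as St.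
  cbv zeta in St. tauto.
Qed.

Lemma goodw_lin Om1 Om2 w1 w2 c : goodw r Om1 w1 -> goodw r Om2 w2 ->
  goodw r (Om1 + Rabs c * Om2) (fun E => w1 E + c * w2 E).
Proof.
  intros [H10 H1] [H20 H2]. split.
  - pose proof (Rabs_pos c). nra.
  - intro E. eapply Rle_trans; [apply Rabs_triang|]. rewrite Rabs_mult.
    specialize (H1 E). specialize (H2 E). pose proof (Rabs_pos c).
    apply Rle_trans with (Om1 * (r * r) ^ E + Rabs c * (Om2 * (r * r) ^ E)); [|right; ring].
    apply Rplus_le_compat; [exact H1|]. apply Rmult_le_compat_l; auto.
Qed.

Lemma phi_linw : forall q w1 w2 Om1 Om2 c vs, goodw r Om1 w1 -> goodw r Om2 w2 -> args_inX (S q) a r vs ->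
  forall n j, Phi q (fun E => w1 E + c * w2 E) vs n j = Phi q w1 vs n j + c * Phi q w2 vs n j.
Proof.
  induction q as [|q IH]; intros w1 w2 Om1 Om2 c vs H1 H2 Hvs n j.
  - cbn [Phi]. ring.
  - cbn [Phi].
    assert (Ht := args_tail _ _ _ _ Hvs).
    rewrite (sum_eq _ (fun n1 => vs O n1 j * Phi q w1 (fun i => vs (S i)) (n - n1)%nat j
                        + c * (vs O n1 j * Phi q w2 (fun i => vs (S i)) (n - n1)%nat j))).
    2:{ intros i _. rewrite (IH _ _ _ _ c _ H1 H2 Ht). ring. }
    rewrite sum_plus, sum_scal_l.
    rewrite (Series_ext _ (fun k => vs O (n + k)%nat j * Phi q (shiftw k w1) (fun i => vs (S i)) k j
                        + c * (vs O (n + k)%nat j * Phi q (shiftw k w2) (fun i => vs (S i)) k j))).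
    2:{ intro k. change (shiftw k (fun E => w1 E + c * w2 E)) with (fun E => shiftw k w1 E + c * shiftw k w2 E).
        rewrite (IH _ _ _ _ c _ (goodw_shift r _ _ k H1) (goodw_shift r _ _ k H2) Ht). ring. }
    rewrite (Series_ext (fun m => vs O (S m) j * Phi q (shiftw (S m) (fun E => w1 E + c * w2 E)) (fun i => vs (S i)) (n + S m)%nat j)
       (fun m => vs O (S m) j * Phi q (shiftw (S m) w1) (fun i => vs (S i)) (n + S m)%nat j
                        + c * (vs O (S m) j * Phi q (shiftw (S m) w2) (fun i => vs (S i)) (n + S m)%nat j))).
    2:{ intro k. change (shiftw (S k) (fun E => w1 E + c * w2 E)) with (fun E => shiftw (S k) w1 E + c * shiftw (S k) w2 E).
        rewrite (IH _ _ _ _ c _ (goodw_shift r _ _ (S k) H1) (goodw_shift r _ _ (S k) H2) Ht). ring. }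
    destruct (phi_conv q _ w1 vs H1 Hvs n j) as [A1 B1].
    destruct (phi_conv q _ w2 vs H2 Hvs n j) as [A2 B2].
    rewrite (ser_lin _ _ c A1 A2), (ser_lin _ _ c B1 B2). ring.
Qed.

End Ops.

Lemma upd_tail (vs : nat -> V) i X : (fun k => upd vs (S i) X (S k)) = upd (fun k => vs (S k)) i X.
Proof. reflexivity. Qed.
Lemma upd_S0 (vs : nat -> V) i X : upd vs (S i) X O = vs O.
Proof. reflexivity. Qed.
Lemma upd_00 (vs : nat -> V) X : upd vs O X O = X.
Proof. reflexivity. Qed.
Lemma upd_0tail (vs : nat -> V) X : (fun k => upd vs O X (S k)) = (fun k => vs (S k)).
Proof. reflexivity. Qed.

Section Lin.
Variables (a r : R) (Ha : 0 < a) (Hr : 0 < r).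

Lemma phi_linv : forall q w Om vs i u u' c, goodw r Om w -> (i < S q)%nat -> args_inX (S q) a r vs ->
  inX a r u -> inX a r u' -> forall n j,
  Phi q w (upd vs i (Vadd u (Vscal c u'))) n j = Phi q w (upd vs i u) n j + c * Phi q w (upd vs i u') n j.
Proof.
  induction q as [|q IH]; intros w Om vs i u u' c Hw Hi Hvs Hu Hu' n j.
  - destruct i; [|lia]. cbn [Phi]. rewrite !upd_00. unfold Vadd, Vscal. ring.
  - cbn [Phi]. destruct i as [|i].
    + rewrite !upd_00, !upd_0tail.
      destruct (phi_conv a r Ha Hr q Om w (upd vs O u) Hw (args_upd _ _ _ _ _ _ Hvs Hu) n j) as [A1 B1].
      destruct (phi_conv a r Ha Hr q Om w (upd vs O u') Hw (args_upd _ _ _ _ _ _ Hvs Hu') n j) as [A2 B2].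
      rewrite !upd_00, !upd_0tail in A1, A2, B1, B2.
      set (vs' := fun k => vs (S k)) in *.
      rewrite (sum_eq _ (fun n1 => u n1 j * Phi q w vs' (n - n1)%nat j
                        + c * (u' n1 j * Phi q w vs' (n - n1)%nat j))).
      2:{ intros k _. unfold Vadd, Vscal. ring. }
      rewrite sum_plus, sum_scal_l.
      rewrite (Series_ext _ (fun k => u (n + k)%nat j * Phi q (shiftw k w) vs' k j
                        + c * (u' (n + k)%nat j * Phi q (shiftw k w) vs' k j))).
      2:{ intro k. unfold Vadd, Vscal. ring. }
      rewrite (Series_ext (fun m => Vadd u (Vscal c u') (S m) j * Phi q (shiftw (S m) w) vs' (n + S m)%nat j)
         (fun m => u (S m) j * Phi q (shiftw (S m) w) vs' (n + S m)%nat j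
                        + c * (u' (S m) j * Phi q (shiftw (S m) w) vs' (n + S m)%nat j))).
      2:{ intro k. unfold Vadd, Vscal. ring. }
      rewrite (ser_lin _ _ c A1 A2), (ser_lin _ _ c B1 B2). ring.
    + rewrite !upd_S0, !upd_tail.
      destruct (phi_conv a r Ha Hr q Om w (upd vs (S i) u) Hw (args_upd _ _ _ _ _ _ Hvs Hu) n j) as [A1 B1].
      destruct (phi_conv a r Ha Hr q Om w (upd vs (S i) u') Hw (args_upd _ _ _ _ _ _ Hvs Hu') n j) as [A2 B2].
      rewrite !upd_S0, !upd_tail in A1, A2, B1, B2.
      set (vs' := fun k => vs (S k)) in *.
      assert (Ht : args_inX (S q) a r vs') by (apply args_tail; exact Hvs).
      assert (Hi' : (i < S q)%nat) by lia.
      rewrite (sum_eq _ (fun n1 => vs O n1 j * Phi q w (upd vs' i u) (n - n1)%nat j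
                        + c * (vs O n1 j * Phi q w (upd vs' i u') (n - n1)%nat j))).
      2:{ intros k _. rewrite (IH w Om vs' i u u' c Hw Hi' Ht Hu Hu'). ring. }
      rewrite sum_plus, sum_scal_l.
      rewrite (Series_ext _ (fun k => vs O (n + k)%nat j * Phi q (shiftw k w) (upd vs' i u) k j
                        + c * (vs O (n + k)%nat j * Phi q (shiftw k w) (upd vs' i u') k j))).
      2:{ intro k. rewrite (IH _ _ vs' i u u' c (goodw_shift r Om w k Hw) Hi' Ht Hu Hu'). ring. }
      rewrite (Series_ext (fun m => vs O (S m) j * Phi q (shiftw (S m) w) (upd vs' i (Vadd u (Vscal c u'))) (n + S m)%nat j)
         (fun m => vs O (S m) j * Phi q (shiftw (S m) w) (upd vs' i u) (n + S m)%nat j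
                        + c * (vs O (S m) j * Phi q (shiftw (S m) w) (upd vs' i u') (n + S m)%nat j))).
      2:{ intro k. rewrite (IH _ _ vs' i u u' c (goodw_shift r Om w (S k) Hw) Hi' Ht Hu Hu'). ring. }
      rewrite (ser_lin _ _ c A1 A2), (ser_lin _ _ c B1 B2). ring.
Qed.

Lemma phi_pl_linear q w Om : goodw r Om w -> pl_linear (S q) a r (Phi q w).
Proof.
  intros Hw vs i u u' c Hi Hvs Hu Hu'.
  apply functional_extensionality; intro n. apply functional_extensionality; intro j.
  unfold Vadd at 2, Vscal at 2. apply (phi_linv q w Om); auto.
Qed.

Lemma phi_inLp q w Om : goodw r Om w -> in_Lp (S q) a r (Phi q w).
Proof.
  intros Hw. split; [apply (phi_pl_linear q w Om Hw)|].
  eexists. apply (phi_plbound a r Ha Hr q Om w Hw).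
Qed.

End Lin.

Lemma Mk_Phi : forall q s vs n j, Mk (S q) s vs n j = Phi q (fun E => s ^ E) vs n j.
Proof.
  induction q as [|q IH]; intros s vs n j.
  - cbn [Mk Phi]. simpl. ring.
  - change (Mk (S (S q)) s vs) with (Mbil s (vs O) (Mk (S q) s (fun i => vs (S i)))).
    unfold Mbil. cbn [Phi].
    assert (Hsh : forall k, shiftw k (fun E => s ^ E) = (fun E => s ^ k * s ^ E)).
    { intro k. apply functional_extensionality; intro E. unfold shiftw. apply pow_add. }
    f_equal; [f_equal|].
    + apply sum_eq. intros i _. rewrite IH. reflexivity.
    + apply Series_ext. intro k. rewrite Hsh, phi_homog, IH. replace (pow s) with (fun E => s ^ E) by reflexivity. ring.
    + apply Series_ext. intro k. rewrite Hsh, phi_homog, IH. replace (pow s) with (fun E => s ^ E) by reflexivity. ring.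
Qed.

Lemma Mk_Phi_fun q s : Mk (S q) s = Phi q (fun E => s ^ E).
Proof.
  apply functional_extensionality; intro vs.
  apply functional_extensionality; intro n. apply functional_extensionality; intro j. apply Mk_Phi.
Qed.

Fixpoint psumR (f : nat -> R) (N : nat) : R :=
  match N with O => 0 | S m => psumR f m + f m end.

Lemma psumR_sum f E : psumR f (S E) = sum_f_R0 f E.
Proof. induction E; simpl in *; [ring|]. rewrite <- IHE. reflexivity. Qed.

Lemma psumR_add f N M : psumR f (N + M) = psumR f N + psumR (fun i => f (N + i)%nat) M.
Proof. induction M; simpl. rewrite Nat.add_0_r; ring. rewrite Nat.add_succ_r. simpl. rewrite IHM. ring. Qed.

Lemma psumR_abs f M : Rabs (psumR f M) <= psumR (fun i => Rabs (f i)) M.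
Proof. induction M; simpl. rewrite Rabs_R0; lra. eapply Rle_trans; [apply Rabs_triang|]. lra. Qed.

Lemma psumR_le f g M : (forall i, f i <= g i) -> psumR f M <= psumR g M.
Proof. intros H; induction M; simpl; [lra|]. specialize (H M). lra. Qed.

Lemma psumR_nonneg f M : (forall i, 0 <= f i) -> 0 <= psumR f M.
Proof. intros H; induction M; simpl; [lra|]. specialize (H M). lra. Qed.

Lemma psumR_tail f N M : (forall i, 0 <= f i) -> psumR (fun i => f (N + i)%nat) M <= psumR f (N + M).
Proof. intros H. rewrite psumR_add. pose proof (psumR_nonneg f N H). lra. Qed.

Lemma psumR_term f k M : (forall i, 0 <= f i) -> (k < M)%nat -> f k <= psumR f M.
Proof.
  intros H Hk. induction M; [lia|]. simpl. destruct (Nat.eq_dec k M).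
  - subst. pose proof (psumR_nonneg f M H). lra.
  - assert (k < M)%nat by lia. specialize (IHM H0). specialize (H M). lra.
Qed.

Lemma psumR_zero M : psumR (fun _ => 0) M = 0.
Proof. induction M; simpl; [reflexivity|rewrite IHM; ring]. Qed.

Lemma psumR_ext f g M : (forall i, f i = g i) -> psumR f M = psumR g M.
Proof. intros H; induction M; simpl; [reflexivity|rewrite IHM, H; reflexivity]. Qed.

Lemma psumR_trunc f E M : (forall k, (E < k)%nat -> f k = 0) -> psumR f (S E + M) = psumR f (S E).
Proof.
  intros H. rewrite psumR_add. rewrite (psumR_ext (fun i => f (S E + i)%nat) (fun _ => 0)); [rewrite psumR_zero; ring|].
  intro i. apply H. lia.
Qed.

Lemma psumR_scal f c M : psumR (fun i => c * f i) M = c * psumR f M.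
Proof. induction M; simpl; [ring|rewrite IHM; ring]. Qed.

Lemma C_nonneg n k : 0 <= Binomial.C n k.
Proof.
  unfold Binomial.C, Rdiv. apply Rmult_le_pos; [left; apply INR_fact_lt_0|].
  left. apply Rinv_0_lt_compat. apply Rmult_lt_0_compat; apply INR_fact_lt_0.
Qed.

Definition tau (h s0 : R) (E k : nat) : R :=
  if (k <=? E)%nat then Binomial.C E k * h ^ k * s0 ^ (E - k) else 0.

Lemma binom_psum h s0 E : (h + s0) ^ E = psumR (tau h s0 E) (S E).
Proof.
  rewrite binomial, psumR_sum. apply sum_eq. intros i Hi. unfold tau.
  rewrite (proj2 (Nat.leb_le i E) Hi). reflexivity.
Qed.

Lemma tau_trunc h s0 E k : (E < k)%nat -> tau h s0 E k = 0.
Proof. intro H. unfold tau. destruct (Nat.leb_spec k E); [lia|reflexivity]. Qed.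

Lemma tau_nonneg h s0 E k : 0 <= h -> 0 <= s0 -> 0 <= tau h s0 E k.
Proof.
  intros H1 H2. unfold tau. destruct (k <=? E)%nat; [|lra].
  apply Rmult_le_pos; [apply Rmult_le_pos; [apply C_nonneg|apply pow_le; lra]|apply pow_le; lra].
Qed.

Definition beta (s0 : R) (k E : nat) : R :=
  if (k <=? E)%nat then Binomial.C E k * s0 ^ (E - k) else 0.

Lemma tau_beta h s0 E k : tau h s0 E k = h ^ k * beta s0 k E.
Proof. unfold tau, beta. destruct (k <=? E)%nat; ring. Qed.

Lemma tau_abs h s0 E k : Rabs (tau h s0 E k) = tau (Rabs h) (Rabs s0) E k.
Proof.
  unfold tau. destruct (k <=? E)%nat; [|apply Rabs_R0].
  rewrite !Rabs_mult, <- !RPow_abs, (Rabs_pos_eq (Binomial.C E k)) by apply C_nonneg. reflexivity.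
Qed.

Section Expand.
Variables (r s0 : R) (Hr : 0 < r).
Let rho1 := r * r - Rabs s0.
Hypothesis Hrho : 0 < rho1.

Lemma binom_rr E : psumR (tau rho1 (Rabs s0) E) (S E) = (r * r) ^ E.
Proof. rewrite <- binom_psum. f_equal. unfold rho1. ring. Qed.

Lemma beta_good k : goodw r (/ rho1 ^ k) (beta s0 k).
Proof.
  split; [left; apply Rinv_0_lt_compat, pow_lt; exact Hrho|].
  intro E. pose proof (pow_lt rho1 k Hrho) as Hp.
  apply (Rmult_le_reg_l (rho1 ^ k)); [exact Hp|].
  replace (rho1 ^ k * (/ rho1 ^ k * (r * r) ^ E)) with ((r * r) ^ E) by (field; lra).
  rewrite <- (Rabs_pos_eq (rho1 ^ k)) at 1 by lra. rewrite <- Rabs_mult, <- tau_beta, tau_abs.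
  rewrite Rabs_pos_eq by lra. rewrite <- binom_rr.
  destruct (Nat.leb_spec k E).
  - apply psumR_term; [|lia]. intro; apply tau_nonneg; [lra|apply Rabs_pos].
  - rewrite tau_trunc by lia. apply psumR_nonneg. intro; apply tau_nonneg; [lra|apply Rabs_pos].
Qed.

Lemma tail_bound h N E : Rabs h < rho1 ->
  Rabs ((s0 + h) ^ E + (-1) * psumR (fun k => h ^ k * beta s0 k E) N) <= (Rabs h / rho1) ^ N * (r * r) ^ E.
Proof.
  intros Hh. set (th := Rabs h / rho1).
  assert (Hth0 : 0 <= th) by (unfold th; apply Rmult_le_pos; [apply Rabs_pos|left; apply Rinv_0_lt_compat; lra]).
  assert (Hth1 : th < 1) by (unfold th; apply (Rmult_lt_reg_r rho1); [lra|]; field_simplify; lra).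
  rewrite (psumR_ext _ (tau h s0 E)) by (intro; symmetry; apply tau_beta).
  replace (s0 + h) with (h + s0) by ring. rewrite binom_psum.
  rewrite <- (psumR_trunc (tau h s0 E) E N) by (intros; apply tau_trunc; auto).
  replace (S E + N)%nat with (N + S E)%nat by lia. rewrite psumR_add.
  replace (psumR (tau h s0 E) N + psumR (fun i => tau h s0 E (N + i)%nat) (S E) + -1 * psumR (tau h s0 E) N)
    with (psumR (fun i => tau h s0 E (N + i)%nat) (S E)) by ring.
  eapply Rle_trans; [apply psumR_abs|].
  apply Rle_trans with (psumR (fun i => th ^ N * tau rho1 (Rabs s0) E (N + i)%nat) (S E)).
  - apply psumR_le. intro i. rewrite tau_abs. unfold tau.
    destruct (N + i <=? E)%nat; [|rewrite Rmult_0_r; lra].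
    assert (Hhk : Rabs h ^ (N + i) <= th ^ N * rho1 ^ (N + i)).
    { replace (Rabs h) with (th * rho1) by (unfold th; field; lra).
      rewrite Rpow_mult_distr. apply Rmult_le_compat_r; [apply pow_le; lra|].
      rewrite pow_add. rewrite <- (Rmult_1_r (th ^ N)) at 2. apply Rmult_le_compat_l; [apply pow_le; lra|].
      assert (Hti : th ^ i <= 1 ^ i) by (apply pow_incr; lra). rewrite pow1 in Hti. exact Hti. }
    assert (HC := C_nonneg E (N + i)). assert (HY := pow_le (Rabs s0) (E - (N + i)) (Rabs_pos s0)).
    apply Rle_trans with (Binomial.C E (N + i) * (th ^ N * rho1 ^ (N + i)) * Rabs s0 ^ (E - (N + i))).
    + apply Rmult_le_compat_r; [exact HY|]. apply Rmult_le_compat_l; [exact HC|exact Hhk].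
    + right; ring.
  - rewrite psumR_scal. apply Rmult_le_compat_l; [apply pow_le; lra|].
    eapply Rle_trans; [apply psumR_tail; intro; apply tau_nonneg; [lra|apply Rabs_pos]|].
    replace (N + S E)%nat with (S E + N)%nat by lia.
    rewrite psumR_trunc by (intros; apply tau_trunc; auto). rewrite binom_rr. lra.
Qed.

End Expand.

Lemma good_pow r s : 0 < r -> Rabs s <= r * r -> goodw r 1 (fun E => s ^ E).
Proof.
  intros Hr Hs. split; [lra|]. intro E. rewrite Rmult_1_l, <- RPow_abs.
  apply pow_incr. split; [apply Rabs_pos|exact Hs].
Qed.

Lemma Xnorm_nonneg a r v : 0 < r -> inX a r v -> 0 <= Xnorm a r v.
Proof.
  intros Hr [_ Hv]. apply series_nonneg; [|exact Hv].
  intro; apply Rmult_le_pos; [apply pow_le; lra|apply elle_norm_nonneg].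
Qed.

Section Final.
Variables (a r : R) (Ha : 0 < a) (Hr : 0 < r).

Lemma wsum_good s0 h N : 0 < r * r - Rabs s0 ->
  exists Om, goodw r Om (fun E => psumR (fun k => h ^ k * beta s0 k E) N).
Proof.
  intros Hrho. induction N.
  - exists 0. split; [lra|]. intro E. simpl. rewrite Rabs_R0. lra.
  - destruct IHN as [Om HOm].
    exists (Om + Rabs (h ^ N) * / (r * r - Rabs s0) ^ N).
    apply (goodw_lin r Om _ _ (beta s0 N) (h ^ N) HOm (beta_good r s0 Hrho N)).
Qed.

Lemma psum_eq q s0 h N vs : 0 < r * r - Rabs s0 -> args_inX (S q) a r vs ->
  pl_psum (fun k => Phi q (beta s0 k)) h N vs = Phi q (fun E => psumR (fun k => h ^ k * beta s0 k E) N) vs.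
Proof.
  intros Hrho Hvs. induction N.
  - cbn [pl_psum psumR].
    apply functional_extensionality; intro n. apply functional_extensionality; intro j.
    transitivity (0 * Phi q (fun _ => 0) vs n j); [unfold Vzero; ring|].
    rewrite <- phi_homog. f_equal. apply functional_extensionality; intro E. ring.
  - cbn [pl_psum]. unfold pl_add, pl_scal. rewrite IHN.
    destruct (wsum_good s0 h N Hrho) as [Om HOm].
    apply functional_extensionality; intro n. apply functional_extensionality; intro j.
    unfold Vadd, Vscal. symmetry.
    apply (phi_linw a r Ha Hr q _ (beta s0 N) Om _ (h ^ N) vs HOm (beta_good r s0 Hrho N) Hvs).
Qed.

Lemma pl_bound_mono p T K K' : K <= K' -> pl_bound p a r T K -> pl_bound p a r T K'.
Proof.
  intros HK H vs Hvs. destruct (H vs Hvs) as [H1 H2]. split; [exact H1|].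
  eapply Rle_trans; [exact H2|]. apply Rmult_le_compat_r; [|exact HK].
  apply prodR_nonneg. intros i Hi. apply Xnorm_nonneg; auto.
Qed.

End Final.

Theorem lemma2p2 (a r delta : R) (p : nat) :
  0 < a -> 0 < r -> 0 < delta -> delta < r -> (2 <= p)%nat ->
  real_analytic_Lp p a r (fun s => Mk p s) (delta ^ 2) /\
  exists K : R, forall z : C, Cmod z < delta -> pl_bound p a r (Mk p (Cmod z ^ 2)) K.
Proof.
  intros Ha Hr Hd Hdr Hp. destruct p as [|q]; [lia|].
  assert (Hdd : delta ^ 2 < r * r) by (simpl; nra).
  set (K := (3 * ca a) ^ q).
  assert (HK : 0 <= K) by (apply pow_le; pose proof (ca_nonneg a); lra).
  split.
  - split.
    + intros s Hs. rewrite Mk_Phi_fun. apply (phi_inLp a r Ha Hr q _ 1). apply good_pow; lra.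
    + intros s0 Hs0. set (rho1 := r * r - Rabs s0).
      assert (Hrho : 0 < rho1) by (unfold rho1; lra).
      exists rho1. split; [exact Hrho|].
      exists (fun k => Phi q (beta s0 k)). split.
      * intro k. apply (phi_inLp a r Ha Hr q _ (/ rho1 ^ k)). apply beta_good; auto.
      * intros s Hs1 Hs2 eps Heps.
        set (h := s - s0).
        set (th := Rabs h / rho1).
        assert (Hth0 : 0 <= th) by (unfold th; apply Rmult_le_pos; [apply Rabs_pos|left; apply Rinv_0_lt_compat; lra]).
        assert (Hh : Rabs h < rho1) by exact Hs1.
        assert (Hth1 : th < 1).
        { unfold th. apply (Rmult_lt_reg_r rho1); [lra|]. unfold Rdiv. rewrite Rmult_assoc, Rinv_l by lra. lra. }
        assert (Hy : 0 < eps / (K + 1)) by (apply Rdiv_lt_0_compat; lra).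
        destruct (pow_lt_1_zero th (ltac:(rewrite Rabs_pos_eq; lra)) _ Hy) as [N0 HN0].
        exists N0. intros N HN vs Hvs.
        rewrite Mk_Phi_fun.
        assert (Hgs : goodw r 1 (fun E => s ^ E)) by (apply good_pow; lra).
        destruct (wsum_good r s0 h N Hrho) as [Om HOm].
        assert (Heq : pl_sub (Phi q (fun E => s ^ E)) (pl_psum (fun k => Phi q (beta s0 k)) h N) vs =
          Phi q (fun E => s ^ E + (-1) * psumR (fun k => h ^ k * beta s0 k E) N) vs).
        { unfold pl_sub. rewrite (psum_eq a r Ha Hr q s0 h N vs Hrho Hvs).
          apply functional_extensionality; intro n. apply functional_extensionality; intro j.
          unfold Vsub. rewrite (phi_linw a r Ha Hr q _ _ 1 Om (-1) vs Hgs HOm Hvs). ring. }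
        rewrite Heq.
        assert (Hgt : goodw r (th ^ N) (fun E => s ^ E + (-1) * psumR (fun k => h ^ k * beta s0 k E) N)).
        { split; [apply pow_le; lra|]. intro E.
          replace s with (s0 + h) by (unfold h; ring).
          apply tail_bound; auto. }
        assert (HB := phi_plbound a r Ha Hr q _ _ Hgt).
        refine (pl_bound_mono a r Hr _ _ _ _ _ HB vs Hvs).
        specialize (HN0 N HN). rewrite Rabs_pos_eq in HN0 by (apply pow_le; lra).
        fold K. apply Rlt_le.
        apply Rle_lt_trans with (eps / (K + 1) * K).
        { apply Rmult_le_compat_r; lra. }
        apply (Rmult_lt_reg_r (K + 1)); [lra|]. field_simplify; [nra|lra].
  - exists (1 * K). intros z Hz. rewrite Mk_Phi_fun.
    apply (phi_plbound a r Ha Hr q 1). apply good_pow; auto.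
    pose proof (Cmod_ge_0 z). rewrite Rabs_pos_eq by (apply pow_le; lra). simpl. nra.
Qed.
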